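(* Let $G$ be a finite connected weighted graph with $N$ vertices and let $0=\lambda_0<\lambda_1\le\cdots\le\lambda_{N-1}$ be the eigenvalues (with multiplicity) of its weighted Laplacian $L_w$. Let $0\le k\le N-1$. Then for every $S_0\subset V(G)$ with $|S_0|\le k$ and every partition $\mathcal{S}=(S_m)_{m=0,\ldots,n}$ of $V(G)$ with initial set $S_0$ and $K_m(\mathcal{S})>0$ for $m=0,\ldots,n-1$, \[ \lambda_k\ge\left(2\delta_{\mathcal{S},2}^2\right)^{-1}; \] equivalently, $\lambda_k\ge\max_{\mathcal{S}}(2\delta_{\mathcal{S},2}^2)^{-1}$, the maximum over all such partitions whose initial set has at most $k$ elements.
   Context: $G$ has vertex set $V(G)$ and symmetric weights $w\ge0$ with $w(u,u)=0$; connected with respect to edges $\{w(u,v)>0\}$. $(L_wf)(v)=\sum_u(f(v)-f(u))w(v,u)$ on $\ell^2(G)$ (vertex weight $\nu\equiv1$). $w_A(v)=\sum_{u\in A}w(u,v)$; $D_m=\sup_{v\in S_m}w_{S_{m+1}}(v)$, $K_m=\inf_{v\in S_{m+1}}w_{S_m}(v)$; $\delta_{\mathcal{S},2}=\left(\sum_{m=1}^n\sum_{j=1}^m\frac{1}{K_{j-1}}\prod_{i=j}^{m-1}\frac{D_i}{K_i}\right)^{1/2}$ (empty products $=1$, empty sums $=0$). *)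

(* Defs.v *)
From HB Require Import structures.
From mathcomp Require Import all_boot all_order all_algebra.
From mathcomp Require Import reals.
Set Implicit Arguments. Unset Strict Implicit. Unset Printing Implicit Defensive.
Import Order.TTheory GRing.Theory Num.Theory.
Local Open Scope ring_scope.

Section Graph.
Variables (R : realType) (N : nat) (w : 'I_N -> 'I_N -> R).

Definition weighted_graph : Prop :=
  [/\ forall u v, w u v = w v u,
      forall u v, 0 <= w u v,
      forall u, w u u = 0 &
      forall u v, connect (fun a b => 0 < w a b) u v].

Definition laplacian : 'M[R]_N :=
  \matrix_(i, j) ((if i == j then \sum_u w i u else 0) - w i j).

Definition laplacian_spectrum (s : seq R) : Prop :=
  [/\ size s = N, sorted <=%R s &
      char_poly laplacian = \prod_(x <- s) ('X - x%:P)].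

Definition wset (A : {set 'I_N}) (v : 'I_N) : R := \sum_(u in A) w u v.

(* total weight: an upper bound for every w_A(v), used as the neutral
   element of the (nonempty) finite infimum below *)
Definition wtot : R := \sum_u \sum_v w u v.

Definition is_partition (n : nat) (S : nat -> {set 'I_N}) : Prop :=
  [/\ forall m, (m <= n)%N -> S m != set0,
      forall i j, (i <= n)%N -> (j <= n)%N -> i <> j -> [disjoint S i & S j] &
      forall v, exists2 m, (m <= n)%N & v \in S m].

(* D_m = sup_{v in S_m} w_{S_{m+1}}(v)  (values are >= 0, S_m nonempty) *)
Definition Dm (S : nat -> {set 'I_N}) (m : nat) : R :=
  \big[Num.max/0]_(v in S m) wset (S m.+1) v.

(* K_m = inf_{v in S_{m+1}} w_{S_m}(v)  (S_{m+1} nonempty) *)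
Definition Km (S : nat -> {set 'I_N}) (m : nat) : R :=
  \big[Num.min/wtot]_(v in S m.+1) wset (S m) v.

Definition delta2sq (n : nat) (S : nat -> {set 'I_N}) : R :=
  \sum_(1 <= m < n.+1) \sum_(1 <= j < m.+1)
     (Km S j.-1)^-1 * \prod_(j <= i < m) (Dm S i / Km S i).

End Graph.

(* Main.v *)
Require Import Defs.
From HB Require Import structures.
From mathcomp Require Import all_boot all_order all_algebra.
From mathcomp Require Import reals.
From mathcomp Require Import complex.
From mathcomp Require Import ring lra.
Import Order.TTheory GRing.Theory Num.Theory.
Local Open Scope ring_scope.
Set Implicit Arguments. Unset Strict Implicit. Unset Printing Implicit Defensive.

Section Hardy.
Variables (R : realType) (N : nat) (w : 'I_N -> 'I_N -> R).
Hypothesis hsym : forall u v, w u v = w v u.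
Hypothesis hpos : forall u v, 0 <= w u v.
Variables (n : nat) (S : nat -> {set 'I_N}).
Variable g : 'I_N -> R.

Lemma wset_ge0 A v : 0 <= wset w A v.
Proof. by apply: sumr_ge0 => u _. Qed.

Lemma wtot_ge0 : 0 <= wtot w.
Proof. by apply: sumr_ge0 => u _; apply: sumr_ge0. Qed.

Lemma Dm_ge0 m : 0 <= Dm w S m.
Proof.
rewrite /Dm; apply: (big_ind (fun x => 0 <= x)) => //.
  by move=> x y hx hy; rewrite le_max hx.
by move=> v _; apply: wset_ge0.
Qed.

Lemma Km_ge0 m : 0 <= Km w S m.
Proof.
rewrite /Km; apply: (big_ind (fun x => 0 <= x)); first exact: wtot_ge0.
  by move=> x y hx hy; rewrite le_min hx.
by move=> v _; apply: wset_ge0.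
Qed.

Lemma wset_le_Dm m u : u \in S m -> wset w (S m.+1) u <= Dm w S m.
Proof. by move=> hu; rewrite /Dm; apply: (le_bigmax_cond _ (P := fun v => v \in S m)). Qed.

Lemma Km_le m v : v \in S m.+1 -> Km w S m <= wset w (S m) v.
Proof. by move=> hv; rewrite /Km; apply: (bigmin_le_cond _ (P := fun v => v \in S m.+1)). Qed.

Definition Pm m := \sum_(1 <= j < m.+1) (Km w S j.-1)^-1 * \prod_(j <= i < m) (Dm w S i / Km w S i).

Lemma Pm0 : Pm 0 = 0.
Proof. by rewrite /Pm big_geq. Qed.

Lemma PmS m : Pm m.+1 = (Km w S m)^-1 + Dm w S m / Km w S m * Pm m.
Proof.
rewrite /Pm big_nat_recr //= [X in _ * X]big_geq // mulr1 addrC; congr (_ + _).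
rewrite mulr_sumr; apply: eq_big_nat => j /andP [hj1 hj2].
rewrite big_nat_recr; last exact: hj2.
by rewrite [in RHS]mulrC -mulrA.
Qed.

Lemma Pm_ge0 m : 0 <= Pm m.
Proof.
apply: sumr_ge0 => j _; apply: mulr_ge0; first by rewrite invr_ge0 Km_ge0.
apply: prodr_ge0 => i _; apply: divr_ge0; [exact: Dm_ge0 | exact: Km_ge0].
Qed.

Definition am m := \sum_(v in S m) g v ^+ 2.
Definition Em m := \sum_(u in S m) \sum_(v in S m.+1) w u v * (g u - g v) ^+ 2.
Definition Fm m := \sum_(0 <= j < m) Em j.

Lemma Em_ge0 m : 0 <= Em m.
Proof. by apply: sumr_ge0 => u _; apply: sumr_ge0 => v _; apply: mulr_ge0; [exact: hpos | exact: sqr_ge0]. Qed.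

Lemma Fm_ge0 m : 0 <= Fm m.
Proof. by apply: sumr_ge0 => j _; apply: Em_ge0. Qed.

Lemma le_eps (x y z : R) : 0 <= z -> (forall e, 0 < e -> x <= y + e * z) -> x <= y.
Proof.
move=> z0 h; apply/ler_addgt0Pr => e e0.
have z1 : 0 < z + 1 by rewrite ltr_wpDl.
apply: (le_trans (h (e / (z + 1)) _)); first by rewrite divr_gt0.
by rewrite lerD2l -mulrA ger_pMr // mulrC ler_pdivrMr // mul1r lerDl.
Qed.

Lemma key_ineq (A B ww x y : R) : 0 <= ww ->
  A * B * (ww * x ^+ 2) <= (A + B) * (B * (ww * (y - x) ^+ 2) + A * (ww * y ^+ 2)).
Proof.
move=> w0; rewrite -subr_ge0.
have -> : (A + B) * (B * (ww * (y - x) ^+ 2) + A * (ww * y ^+ 2)) - A * B * (ww * x ^+ 2)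
  = ww * (B * (x - y) - A * y) ^+ 2 by ring.
by apply: mulr_ge0 => //; apply: sqr_ge0.
Qed.

Lemma step m : 0 < Km w S m -> am m <= Pm m * Fm m -> am m.+1 <= Pm m.+1 * Fm m.+1.
Proof.
move=> Kpos IH.
set K := Km w S m; set D := Dm w S m; set A := K^-1.
have A0 : 0 < A by rewrite invr_gt0.
have AK : A * K = 1 by rewrite mulVf // gt_eqF.
have D0 : 0 <= D := Dm_ge0 m.
have P0 := Pm_ge0 m.
have F0 := Fm_ge0 m.
have E0 := Em_ge0 m.
have -> : Fm m.+1 = Em m + Fm m by rewrite /Fm big_nat_recr //= addrC.
have -> : Pm m.+1 = A + A * D * Pm m by rewrite PmS /A /D /K; ring.
apply: (@le_eps _ _ (Em m + Fm m)); first by rewrite addr_ge0.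
move=> e e0.
set B := A * D * Pm m + e.
have B0 : 0 < B by rewrite /B ltr_wpDl // !mulr_ge0 // ltW.
set Y := \sum_(v in S m.+1) \sum_(u in S m) w u v * g u ^+ 2.
have h1 : K * am m.+1 <= \sum_(v in S m.+1) \sum_(u in S m) w u v * g v ^+ 2.
  rewrite /am mulr_sumr; apply: ler_sum => v hv.
  by rewrite -mulr_suml ler_wpM2r ?sqr_ge0 // Km_le.
have hE : \sum_(v in S m.+1) \sum_(u in S m) w u v * (g u - g v) ^+ 2 = Em m.
  by rewrite /Em exchange_big.
have hY : Y <= D * am m.
  rewrite /Y exchange_big /am mulr_sumr; apply: ler_sum => u hu.
  rewrite -mulr_suml ler_wpM2r ?sqr_ge0 //.
  apply: le_trans (wset_le_Dm hu); rewrite /wset le_eqVlt; apply/orP; left.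
  by apply/eqP; apply: eq_bigr => v _; rewrite hsym.
have h2 : A * B * (K * am m.+1) <= (A + B) * (B * Em m + A * Y).
  apply: le_trans (ler_wpM2l _ h1) _; first by rewrite mulr_ge0 // ltW.
  rewrite -hE /Y !mulr_sumr -big_split /= mulr_sumr; apply: ler_sum => v hv.
  rewrite !mulr_sumr -big_split /= mulr_sumr; apply: ler_sum => u hu.
  by apply: key_ineq.
have h3 : A * B * (K * am m.+1) = B * am m.+1.
  by rewrite -mulrA mulrCA [A * _]mulrA AK mul1r.
have h4 : A * Y <= B * Fm m.
  apply: le_trans (ler_wpM2l (ltW A0) hY) _.
  rewrite mulrA; apply: le_trans (ler_wpM2l _ IH) _; first by rewrite mulr_ge0 // ltW.
  by rewrite mulrA ler_wpM2r // /B lerDl ltW.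
have h5 : B * am m.+1 <= B * ((A + B) * (Em m + Fm m)).
  rewrite -h3; apply: le_trans h2 _.
  rewrite [X in _ <= X]mulrCA; apply: ler_wpM2l; first by rewrite addr_ge0 ?ltW.
  rewrite mulrDr lerD2l.
  exact: h4.
have h6 : am m.+1 <= (A + B) * (Em m + Fm m) by rewrite -(ler_pM2l B0).
apply: le_trans h6 _; rewrite /B le_eqVlt; apply/orP; left; apply/eqP; ring.
Qed.


Hypothesis hpart : is_partition n S.
Hypothesis hK : forall m, (m < n)%N -> 0 < Km w S m.
Hypothesis hg0 : forall v, v \in S 0%N -> g v = 0.

Lemma am_le m : (m <= n)%N -> am m <= Pm m * Fm m.
Proof.
elim: m => [_|m IH hm].
  by rewrite /am big1 ?Pm0 ?mul0r // => v hv; rewrite hg0 // expr0n.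
exact: step (hK hm) (IH (ltnW hm)).
Qed.

Lemma sum_part (h : 'I_N -> R) : \sum_v h v = \sum_(m < n.+1) \sum_(v in S m) h v.
Proof.
case: hpart => _ hdis hcov.
rewrite -(@partition_disjoint_bigcup _ _ _ _ _ (fun i : 'I_n.+1 => S i)).
  apply: eq_bigl => v; symmetry; apply/bigcupP.
  have [m hm hv] := hcov v.
  by exists (Ordinal (hm : (m < n.+1)%N)).
move=> i j hij; apply: hdis; [exact: (ltn_ord i) | exact: (ltn_ord j) | idtac].
by move=> e; move/eqP: hij; apply; apply: val_inj.
Qed.

Lemma sub_sum (A : {set 'I_N}) (f : 'I_N -> R) : (forall v, 0 <= f v) ->
  \sum_(v in A) f v <= \sum_v f v.
Proof.
move=> f0; rewrite big_mkcond; apply: ler_sum => v _.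
by case: ifP => // _; apply: f0.
Qed.

Lemma Fm_mono m : (m <= n)%N -> Fm m <= Fm n.
Proof.
move=> hm; rewrite /Fm [X in _ <= X](big_cat_nat _ (n:=m)) //=.
apply: ler_wpDr => //.
by apply: sumr_ge0 => j _; apply: Em_ge0.
Qed.

Definition Esum := \sum_u \sum_v w u v * (g u - g v) ^+ 2.

Lemma delta_ge0 : 0 <= delta2sq w n S.
Proof. by apply: sumr_ge0 => m _; apply: Pm_ge0. Qed.

Lemma hardy : \sum_v g v ^+ 2 <= delta2sq w n S * Esum.
Proof.
rewrite sum_part.
have h1 : \sum_(m < n.+1) am m <= \sum_(m < n.+1) Pm m * Fm n.
  apply: ler_sum => m _; apply: le_trans (am_le _) _; first by rewrite -ltnS ltn_ord.
  by rewrite ler_wpM2l ?Pm_ge0 // Fm_mono // -ltnS ltn_ord.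
apply: le_trans h1 _; rewrite -mulr_suml.
have -> : \sum_(m < n.+1) Pm m = delta2sq w n S.
  by rewrite -(big_mkord xpredT Pm) big_ltn // Pm0 add0r.
rewrite ler_wpM2l ?delta_ge0 //.
set H := fun u => \sum_v w u v * (g u - g v) ^+ 2.
have H0 u : 0 <= H u by apply: sumr_ge0 => v _; apply: mulr_ge0 => //; apply: sqr_ge0.
have -> : Esum = \sum_(m < n.+1) \sum_(u in S m) H u by rewrite -sum_part.
rewrite -(big_mkord xpredT (fun m => \sum_(u in S m) H u)) big_nat_recr //=.
apply: ler_wpDr; first by apply: sumr_ge0.
rewrite /Fm; apply: ler_sum_nat => j _; apply: ler_sum => u hu.
apply: sub_sum => v; apply: mulr_ge0 => //; apply: sqr_ge0.
Qed.

End Hardy.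

Section Quad.
Variables (R : realType) (N : nat) (w : 'I_N -> 'I_N -> R).
Hypothesis hsym : forall u v, w u v = w v u.

Definition Qf (g : 'I_N -> R) := \sum_i \sum_j g i * laplacian w i j * g j.

Lemma Esum_Qf g : Esum w g = 2 * Qf g.
Proof.
have e1 : Esum w g = \sum_i \sum_j (w i j * g i ^+ 2 - 2 * (w i j * g i * g j))
                    + \sum_i \sum_j w i j * g j ^+ 2.
  rewrite /Esum -big_split; apply: eq_bigr => i _ /=.
  rewrite -big_split; apply: eq_bigr => j _ /=; ring.
have e3 : \sum_i \sum_j w i j * g j ^+ 2 = \sum_i \sum_j w i j * g i ^+ 2.
  rewrite exchange_big; apply: eq_bigr => i _; apply: eq_bigr => j _.
  by rewrite hsym.
have e2 : Qf g = \sum_i \sum_j (w i j * g i ^+ 2 - w i j * g i * g j).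
  rewrite /Qf; apply: eq_bigr => i _.
  have -> : \sum_j g i * laplacian w i j * g j =
     \sum_j g i * (if i == j then \sum_u w i u else 0) * g j - \sum_j g i * w i j * g j.
    rewrite -sumrB; apply: eq_bigr => j _; by rewrite mxE mulrBr mulrBl.
  rewrite (bigD1 i) //= eqxx [X in g i * _ * g i + X]big1 ?addr0; last first.
    by move=> j hj; rewrite eq_sym (negbTE hj) mulr0 mul0r.
  rewrite mulr_sumr mulr_suml -sumrB; apply: eq_bigr => j _; ring.
rewrite e1 e3 e2 mulr_sumr -big_split; apply: eq_bigr => i _ /=.
rewrite mulr_sumr -big_split; apply: eq_bigr => j _ /=; ring.
Qed.

End Quad.
Section CplxLemmas.
Variable R : realType.
Local Notation C := (R[i]).
Local Notation Re := (@complex.Re R).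
Local Notation Im := (@complex.Im R).
Lemma conjE (x : C) : Num.conj x = conjc x.
Proof.
have [->|x0] := eqVneq x 0; first by rewrite rmorph0 conjc0.
apply: (mulfI x0); by rewrite -normCK sqr_normc.
Qed.
Lemma ReD (x y : C) : Re (x + y) = Re x + Re y.
Proof. by case: x => a b; case: y => c d. Qed.
Lemma ReB (x y : C) : Re (x - y) = Re x - Re y.
Proof. by case: x => a b; case: y => c d. Qed.
Lemma Re0 : Re (0 : C) = 0. Proof. by []. Qed.
Lemma ReMr (r : R) (x : C) : Re (real_complex R r * x) = r * Re x.
Proof. case: x => a b /=. ring. Qed.
Lemma ReMconj (x y : C) : Re (x * Num.conj y) = Re x * Re y + Im x * Im y.
Proof. rewrite conjE; case: x => a b; case: y => c d /=. ring. Qed.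
Lemma conj_real (r : R) : Num.conj (real_complex R r) = real_complex R r.
Proof. by rewrite conjE conjc_real. Qed.
Lemma ReSum I (r : seq I) (P : pred I) (F : I -> C) :
  Re (\sum_(i <- r | P i) F i) = \sum_(i <- r | P i) Re (F i).
Proof. exact: (big_morph Re (@ReD) Re0). Qed.
End CplxLemmas.

Lemma char_poly_similar (F : fieldType) n (P D : 'M[F]_n) : P \in unitmx ->
  char_poly (invmx P *m D *m P) = char_poly D.
Proof.
move=> Pu; rewrite /char_poly /char_poly_mx.
set Qp := map_mx polyC (invmx P); set Pp := map_mx polyC P.
have QP : Qp *m Pp = 1%:M by rewrite -map_mxM mulVmx // map_mx1.
have -> : map_mx polyC (invmx P *m D *m P) = Qp *m map_mx polyC D *m Pp by rewrite !map_mxM.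
have PQ : Pp *m Qp = 1%:M by rewrite -map_mxM mulmxV // map_mx1.
have E : 'X%:M - Qp *m map_mx polyC D *m Pp = Qp *m ('X%:M - map_mx polyC D) *m Pp.
  by rewrite mulmxBr mulmxBl mul_mx_scalar -scalemxAl QP scalemx1.
rewrite E !det_mulmx mulrC mulrA -det_mulmx PQ det1 mul1r //.
Qed.

Section Spec.
Variables (R : realType) (N : nat) (w : 'I_N -> 'I_N -> R).
Hypothesis hsym : forall u v, w u v = w v u.
Local Notation C := (R[i]).
Local Notation toC := (real_complex R).
Local Notation Re := (@complex.Re R).
Local Notation Im := (@complex.Im R).
Local Notation L := (laplacian w).
Local Notation adj M := (map_mx Num.conj (trmx M)).

Definition Lc : 'M[C]_N := map_mx toC L.

Lemma L_sym i j : L i j = L j i.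
Proof.
rewrite /laplacian !mxE; have [->//|hij] := eqVneq i j.
by rewrite hsym.
Qed.

Lemma Lc_adj : adj Lc = Lc.
Proof. apply/matrixP => i j; rewrite !mxE conj_real; have [->//|hij] := eqVneq i j; by rewrite hsym. Qed.

Lemma Lc_normal : Lc \is normalmx.
Proof. by apply/normalmxP; rewrite Lc_adj. Qed.

Lemma spectral_count (S0 : {set 'I_N}) (s : seq R) (c : R) :
  (forall g : 'I_N -> R, (forall v, v \in S0 -> g v = 0) -> c * \sum_v g v ^+ 2 <= Qf w g) ->
  char_poly L = \prod_(x <- s) ('X - x%:P) ->
  (count (fun x : R => (x < c)%R) s <= #|S0|)%N.
Proof.
move=> hQ hchar.
set P := spectralmx Lc; set d := spectral_diag Lc.
have /orthomx_spectralP hP := Lc_normal.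
have Pun : P \is unitarymx := spectral_unitarymx Lc.
have /unitarymxP PPt := Pun.
have Pinv : invmx P = adj P := invmx_unitary Pun.
have Punit : P \in unitmx := unitarymx_unit Pun.
have hcp : \prod_(i < N) ('X - (d 0 i)%:P) = \prod_(x <- map toC s) ('X - x%:P).
  transitivity (char_poly Lc).
    rewrite hP char_poly_similar // char_poly_trig ?diag_mx_is_trig //.
    by apply: eq_bigr => i _; rewrite mxE eqxx mulr1n.
  rewrite /Lc -map_char_poly hchar rmorph_prod big_map.
  by apply: eq_bigr => x _; apply: map_polyXsubC.
have hperm : perm_eq (map (fun i => d 0 i) (enum 'I_N)) (map toC s).
  apply: prod_XsubC_eq; rewrite big_map enumT -hcp.
  by [].
set J := [set i | d 0 i < toC c].
have hJ : #|J| = count (fun x : R => (x < c)%R) s.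
  have := (permP hperm) (fun z => z < toC c); rewrite !count_map.
  have -> : count (preim toC (fun z => z < toC c)) s = count (fun x : R => (x < c)%R) s.
    by apply: eq_count => x /=; rewrite ltcR.
  move=> <-; rewrite cardE /enum_mem size_filter.
  by apply: eq_count => i; rewrite /= inE.
rewrite -hJ; case: (leqP #|J| #|S0|) => // hlt.
exfalso.
pose E : 'M[C]_(#|J|, N) := \matrix_(i, k) ((enum_val i == k)%:R).
pose EP := E *m P.
pose M : 'M[C]_(#|J|, #|S0|) := \matrix_(i, j) EP i (enum_val j).
have kerne : kermx M != 0.
  rewrite -mxrank_eq0 mxrank_ker subn_eq0 -ltnNge.
  exact: leq_ltn_trans (rank_leq_col M) hlt.
have [b hb b0] := rowV0Pn kerne.
move/sub_kermxP: hb => bM.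
pose a := b *m E; pose f := a *m P.
have fS0 v : v \in S0 -> f 0 v = 0.
  move=> hv; have := congr1 (fun m : 'M[C]_(1, #|S0|) => m 0 (enum_rank_in hv v)) bM.
  rewrite mxE [RHS]mxE => <-.
  rewrite /f /a -mulmxA mxE; apply: eq_bigr => i _.
  by rewrite [in RHS]mxE enum_rankK_in // /EP mxE.
have aJ k : k \notin J -> a 0 k = 0.
  move=> hk; rewrite /a mxE big1 // => i _; rewrite mxE.
  case: eqP => [hik|]; last by rewrite mulr0.
  by move: (enum_valP i); rewrite hik (negbTE hk).
have : ~~ [forall i, b 0 i == 0].
  apply: contra b0 => /forallP hb0; apply/eqP/rowP => i; rewrite mxE; exact/eqP/hb0.
move/forallPn => [i0 hi0].
pose k0 := enum_val i0.
have ak0 : a 0 k0 = b 0 i0.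
  rewrite /a mxE (bigD1 i0) //= mxE eqxx mulr1 big1 ?addr0 // => i hi; rewrite mxE.
  case: eqP => [/enum_val_inj e|]; last by rewrite mulr0.
  by rewrite e eqxx in hi.
have k0J : k0 \in J := enum_valP i0.
have adjM m n p (A : 'M[C]_(m, n)) (B : 'M[C]_(n, p)) : adj (A *m B) = adj B *m adj A.
  by rewrite trmx_mul map_mxM.
have hfL : f *m Lc *m adj f = a *m diag_mx d *m adj a.
  rewrite /f hP Pinv adjM !mulmxA -(mulmxA a P) PPt mulmx1.
  by rewrite -(mulmxA (a *m diag_mx d) P) PPt mulmx1.
have hff : f *m adj f = a *m adj a.
  by rewrite /f adjM !mulmxA -(mulmxA a P) PPt mulmx1.
have hX : (f *m Lc *m adj f) 0 0 = \sum_k a 0 k * d 0 k * Num.conj (a 0 k).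
  rewrite hfL mxE; apply: eq_bigr => k _.
  by rewrite mul_mx_diag !mxE.
have hY : (f *m adj f) 0 0 = \sum_k a 0 k * Num.conj (a 0 k).
  by rewrite hff mxE; apply: eq_bigr => k _; rewrite !mxE.
have hpos : 0 < toC c * (f *m adj f) 0 0 - (f *m Lc *m adj f) 0 0.
  rewrite hX hY mulr_sumr -sumrB (bigD1 k0) //=.
  have tE k : toC c * (a 0 k * Num.conj (a 0 k)) - a 0 k * d 0 k * Num.conj (a 0 k)
      = (toC c - d 0 k) * (a 0 k * Num.conj (a 0 k)) by ring.
  apply: ltr_wpDr.
    apply: sumr_ge0 => k _; rewrite tE.
    have [kJ|kJ] := boolP (k \in J).
      apply: mulr_ge0; last exact: mul_conjC_ge0.
      by move: kJ; rewrite inE subr_ge0 => /ltW.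
    by rewrite aJ // mul0r mulr0.
  rewrite tE; apply: mulr_gt0.
    by rewrite subr_gt0; move: k0J; rewrite inE.
  by rewrite mul_conjC_gt0 ak0.
pose g := fun i => Re (f 0 i); pose h := fun i => Im (f 0 i).
have hReX : Re ((f *m Lc *m adj f) 0 0) = Qf w g + Qf w h.
  rewrite mxE ReSum /Qf [X in _ = X + _]exchange_big [X in _ = _ + X]exchange_big -big_split /=.
  apply: eq_bigr => j _.
  rewrite [(f *m Lc) 0 j]mxE mulr_suml ReSum -big_split /=; apply: eq_bigr => i _.
  have -> : Lc i j = toC (L i j) by rewrite /Lc mxE.
  have -> : adj f j 0 = Num.conj (f 0 j) by rewrite !mxE.
  have -> : f 0 i * toC (L i j) * Num.conj (f 0 j) = toC (L i j) * (f 0 i * Num.conj (f 0 j)) by ring.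
  by rewrite ReMr ReMconj /g /h; ring.
have hReY : Re ((f *m adj f) 0 0) = \sum_v g v ^+ 2 + \sum_v h v ^+ 2.
  rewrite mxE ReSum -big_split; apply: eq_bigr => v _ /=.
  have -> : adj f v 0 = Num.conj (f 0 v) by rewrite !mxE.
  by rewrite ReMconj /g /h !expr2.
have hg : c * \sum_v g v ^+ 2 <= Qf w g by apply: hQ => v hv; rewrite /g fS0.
have hh : c * \sum_v h v ^+ 2 <= Qf w h by apply: hQ => v hv; rewrite /h fS0.
move: hpos; rewrite ltcE => /andP [_].
rewrite Re0 ReB ReMr hReX hReY mulrDr.
lra.
Qed.
End Spec.

Unset Implicit Arguments.

Theorem corollary3p5 (R : realType) (N : nat) (w : 'I_N -> 'I_N -> R)
  (s : seq R) (k : nat) (n : nat) (S : nat -> {set 'I_N}) :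
  weighted_graph w ->
  laplacian_spectrum w s ->
  (k < N)%N ->
  (#|S 0%N| <= k)%N ->
  is_partition n S ->
  (forall m, (m < n)%N -> 0 < Km w S m) ->
  (2 * delta2sq w n S)^-1 <= s`_k.
Proof.
move=> [hsym hpos hdiag hconn] [hsize hsorted hchar] hk hS0 hpart hK.
have hn : (0 < n)%N.
  rewrite lt0n; apply/negP => /eqP hn0.
  case: hpart => _ _ hcov.
  have : (N <= #|S 0%N|)%N.
    rewrite -[X in (X <= _)%N]card_ord; apply: subset_leq_card; apply/subsetP => v _.
    have [m hm hv] := hcov v; move: hm; rewrite hn0 leqn0 => /eqP hm0.
    by rewrite -hm0.
  move=> hN; have := leq_trans hN hS0; rewrite leqNgt hk //.
have hd : 0 < delta2sq w n S.
  have -> : delta2sq w n S = \sum_(1 <= m < n.+1) Pm w S m by [].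
  rewrite big_ltn ?ltnS // PmS Pm0 mulr0 addr0.
  apply: ltr_wpDr; first by apply: sumr_ge0 => m _; apply: Pm_ge0.
  by rewrite invr_gt0; apply: hK.
set c := (2 * delta2sq w n S)^-1.
have hQ : forall g : 'I_N -> R, (forall v, v \in S 0%N -> g v = 0) ->
    c * \sum_v g v ^+ 2 <= Qf w g.
  move=> g hg0; have := @hardy R N w hsym hpos n S g hpart hK hg0.
  rewrite (Esum_Qf hsym) => hh.
  rewrite /c ler_pdivrMl ?mulr_gt0 //.
  by move: hh; rewrite mulrA (mulrC (delta2sq w n S)).
have hcnt := @spectral_count R N w hsym (S 0%N) s c hQ hchar.
apply: (nth_count_ge 0); first exact: hsorted.
by rewrite hsize hk andbT (leq_trans hcnt hS0).
Qed.
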